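(* Let $G$ be a graph and $v$ a vertex of $G$. Then $$\phi(G)\le \phi(G-v)+\phi(G-N[v])+\sum_{u\in N(v)}\phi\big(G-(N[v]\cup N[u])\big).$$ Moreover, if there exists a vertex $w\in N(v)$ with $N[w]\subseteq N[v]$, then $$\phi(G)\le \phi(G-v)+\sum_{u\in N(v)}\phi\big(G-(N[v]\cup N[u])\big).$$
   Context: Graphs are finite and simple. $N(v)$ is the neighborhood of $v$, $N[v]=N(v)\cup\{v\}$, and $G-S$ is the subgraph induced by $V(G)\setminus S$. A subset $F$ of vertices is a dissociation set if $G[F]$ has maximum degree at most $1$; a maximal dissociation set is one not properly contained in another dissociation set; $\phi(G)$ is the number of maximal dissociation sets of $G$, with $\phi=1$ for the graph with no vertices. *)

(* Defs.v *)
From mathcomp Require Import all_boot.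
Set Implicit Arguments. Unset Strict Implicit. Unset Printing Implicit Defensive.

(* A finite simple graph: vertex type T : finType, adjacency e : rel T,
   assumed symmetric and irreflexive (hypotheses of the theorem). *)

Section Graph.
Variables (T : finType) (e : rel T).

Definition nbh (v : T) : {set T} := [set u | e v u].
Definition cnbh (v : T) : {set T} := v |: nbh v.

Definition dissoc (F : {set T}) : bool :=
  [forall x in F, #|F :&: nbh x| <= 1].

(* phi of the induced subgraph G[S]: number of maximal dissociation sets of G[S]
   (dissociation sets of G[S] are exactly dissociation sets of G contained in S).
   For S = set0 this equals 1 (the empty set is the unique maximal one). *)
Definition phi (S : {set T}) : nat :=
  #|[set F : {set T} | maxset (fun F : {set T} => (F \subset S) && dissoc F) F]|.

End Graph.

(* Main.v *)
Require Import Defs.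
From mathcomp Require Import all_boot.
Set Implicit Arguments. Unset Strict Implicit. Unset Printing Implicit Defensive.

Lemma card_bigcup_le (T I : finType) (A : {pred I}) (f : I -> {set T}) :
  #|\bigcup_(i in A) f i| <= \sum_(i in A) #|f i|.
Proof.
apply: (big_ind2 (fun (X : {set T}) n => #|X| <= n)) => //.
- by rewrite cards0.
- move=> X1 n1 X2 n2 h1 h2; apply: leq_trans (leq_card_setU _ _) _.
  exact: leq_add.
Qed.

Section G.
Variables (T : finType) (e : rel T).
Hypotheses (e_sym : symmetric e) (e_irr : irreflexive e).

Lemma in_nbh x y : (y \in nbh e x) = e x y.
Proof. by rewrite inE. Qed.

Lemma dissoc_sub (F G : {set T}) : dissoc e F -> G \subset F -> dissoc e G.
Proof.
move=> /forall_inP dF sGF; apply/forall_inP => x xG.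
apply: leq_trans (dF x (subsetP sGF x xG)).
by apply: subset_leq_card; apply: setSI.
Qed.

Lemma dissoc_le1 (F : {set T}) x y z : dissoc e F -> z \in F -> x \in F -> y \in F ->
  e z x -> e z y -> x = y.
Proof.
move=> /forall_inP dF zF xF yF zx zy.
have := dF z zF => /card_le1_eqP h; apply: h; by rewrite inE ?xF ?yF in_nbh.
Qed.

Lemma dissoc_add (F : {set T}) x : dissoc e F -> #|F :&: nbh e x| <= 1 ->
  (forall y, y \in F -> e x y -> F :&: nbh e y = set0) -> dissoc e (x |: F).
Proof.
move=> /forall_inP dF hx hy; apply/forall_inP => y.
rewrite in_setU1 => /predU1P [->|yF].
  apply: leq_trans hx; apply: subset_leq_card; apply/subsetP => z.
  rewrite !inE => /andP [/predU1P [->|zF] xz]; first by rewrite e_irr in xz.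
  by rewrite zF.
case exy: (e x y).
  have h0 := hy y yF exy.
  rewrite -(cards1 x); apply: subset_leq_card; apply/subsetP => z.
  rewrite !inE => /andP [/predU1P [->|zF] yz] //.
  have : z \in F :&: nbh e y by rewrite inE zF in_nbh.
  by rewrite h0 inE.
apply: leq_trans (dF y yF); apply: subset_leq_card; apply/subsetP => z.
rewrite !inE => /andP [/predU1P [->|zF] yz].
  by rewrite e_sym exy in yz.
by rewrite zF.
Qed.

Definition P (S : {set T}) := fun F : {set T} => (F \subset S) && dissoc e F.

Lemma maxset_restr (S S' F : {set T}) : S' \subset S -> F \subset S' ->
  maxset (P S) F -> maxset (P S') F.
Proof.
move=> sS sF /maxsetP [[/andP [_ dF]] mF]; apply/maxsetP; split.
  by rewrite /P sF dF.
move=> B /andP [sB dB] sFB; apply: mF => //.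
by rewrite /P (subset_trans sB sS) dB.
Qed.


Lemma L2 (F : {set T}) v : maxset (P setT) F -> v \in F -> F :&: nbh e v = set0 ->
  maxset (P (~: cnbh e v)) (F :\ v).
Proof.
move=> /maxsetP [/andP [_ dF] mF] vF Fv; apply/maxsetP; split.
  rewrite /P (dissoc_sub dF) ?subD1set // andbT; apply/subsetP => y.
  rewrite !inE => /andP [yv yF]; rewrite (negbTE yv) /=.
  apply/negP => evy; have : y \in F :&: nbh e v by rewrite inE yF in_nbh.
  by rewrite Fv inE.
move=> B /andP [sB dB] sFB.
have vB : v \notin B.
  by apply/negP => /(subsetP sB); rewrite !inE eqxx.
have dvB : dissoc e (v |: B).
  apply: dissoc_add => //.
    suff -> : B :&: nbh e v = set0 by rewrite cards0.
    apply/setP => y; rewrite !inE; apply/negP => /andP [yB vy].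
    by move: (subsetP sB y yB); rewrite !inE vy orbT.
  move=> y yB vy; by move: (subsetP sB y yB); rewrite !inE vy orbT.
have E : v |: B = F.
  apply: mF; first by rewrite /P subsetT dvB.
  by rewrite -(setD1K vF) setUS.
by rewrite -E setU1K.
Qed.

Lemma L3 (F : {set T}) v u : maxset (P setT) F -> e v u -> v \in F -> u \in F ->
  maxset (P (~: (cnbh e v :|: cnbh e u))) (F :\ u :\ v).
Proof.
move=> /maxsetP [/andP [_ dF] mF] vu vF uF.
have uv : u != v by apply/eqP => E; rewrite E e_irr in vu.
apply/maxsetP; split.
  rewrite /P (dissoc_sub dF); last by rewrite (subset_trans (subD1set _ _)) ?subD1set.
  rewrite andbT; apply/subsetP => y.
  rewrite !inE => /and3P [yv yu yF]; rewrite (negbTE yv) (negbTE yu) /=.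
  apply/negP => /orP [evy|euy].
    by move/eqP: yu; apply; apply: (dissoc_le1 dF vF yF uF).
  move/eqP: yv; apply; apply: (dissoc_le1 dF uF yF vF) => //; by rewrite e_sym.
move=> B /andP [sB dB] sFB.
have nB y : y \in B -> [/\ y != v, y != u, ~~ e v y & ~~ e u y].
  move=> yB; move: (subsetP sB y yB); rewrite !inE.
  by case: (y == v); case: (y == u); case: (e v y); case: (e u y).
have vB : v \notin B by apply/negP => /nB [/eqP].
have uB : u \notin B by apply/negP => /nB [_ /eqP].
have dvB : dissoc e (v |: B).
  apply: dissoc_add => //.
    suff -> : B :&: nbh e v = set0 by rewrite cards0.
    apply/setP => y; rewrite !inE; apply/negP => /andP [/nB [_ _ /negP]].
    by [].
  by move=> y /nB [_ _ /negP].
have duvB : dissoc e (u |: (v |: B)).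
  apply: dissoc_add => //.
    rewrite -(cards1 v); apply: subset_leq_card; apply/subsetP => y.
    rewrite !inE => /andP [/predU1P [->|/nB [_ _ _ /negP]] //].
  move=> y; rewrite in_setU1 => /predU1P [->|/nB [_ _ _ /negP]] // _.
  apply/setP => z; rewrite !inE; apply/negP => /andP [/predU1P [->|/nB [_ _ /negP]]] //.
  by rewrite e_irr.
have E : u |: (v |: B) = F.
  apply: mF; first by rewrite /P subsetT duvB.
  rewrite -{1}(setD1K uF) -(setD1K (_ : v \in F :\ u)); last by rewrite !inE eq_sym uv.
  by rewrite !setUS.
rewrite -E setU1K ?setU1K //; by rewrite in_setU1 negb_or uv.
Qed.

Lemma L4 (F : {set T}) v w : maxset (P setT) F -> v \in F -> F :&: nbh e v = set0 ->
  w \in nbh e v -> cnbh e w \subset cnbh e v -> False.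
Proof.
move=> /maxsetP [/andP [_ dF] mF] vF Fv wv sw.
have nF y : y \in F -> y != v -> ~~ e v y.
  move=> yF _; apply/negP => vy; have : y \in F :&: nbh e v by rewrite inE yF in_nbh.
  by rewrite Fv inE.
have wF : w \notin F.
  rewrite in_nbh in wv; apply/negP => wF.
  have wv' : w != v by apply/eqP => E; rewrite E e_irr in wv.
  by move: (nF w wF wv'); rewrite wv.
have nw y : y \in F -> y != v -> ~~ e w y.
  move=> yF yv; apply/negP => wy.
  have : y \in cnbh e v by apply: (subsetP sw); rewrite !inE wy orbT.
  by rewrite !inE (negbTE yv) (negbTE (nF y yF yv)).
have dw : dissoc e (w |: F).
  apply: dissoc_add => //.
    rewrite -(cards1 v); apply: subset_leq_card; apply/subsetP => y.
    rewrite !inE => /andP [yF wy]; apply: (contraTT _ wy) => yv.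
    exact: nw.
  move=> y yF wy; have yv : y = v.
    by apply/eqP; apply: (contraTT _ wy) => yv; exact: nw.
  by rewrite yv.
have := mF (w |: F); rewrite /P subsetT dw => /(_ isT (subsetUr _ _)) E.
by move: wF; rewrite -E in_setU1 eqxx.
Qed.

End G.

Theorem lemma2p2 (T : finType) (e : rel T)
  (e_sym : symmetric e) (e_irr : irreflexive e) (v : T) :
  phi e [set: T] <=
    phi e ([set: T] :\ v) + phi e (~: cnbh e v)
    + \sum_(u in nbh e v) phi e (~: (cnbh e v :|: cnbh e u))
  /\
  ((exists2 w, w \in nbh e v & cnbh e w \subset cnbh e v) ->
   phi e [set: T] <=
     phi e ([set: T] :\ v)
     + \sum_(u in nbh e v) phi e (~: (cnbh e v :|: cnbh e u))).
Proof.
have phiE S : phi e S = #|[set F | maxset (P e S) F]| by [].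
set M := [set F | maxset (P e setT) F].
set M1 := [set F in M | v \notin F].
set M2 := [set F in M | (v \in F) && (F :&: nbh e v == set0)].
set M3 := fun u => [set F in M | (v \in F) && (u \in F)].
have h1 : #|M1| <= phi e (setT :\ v).
  rewrite phiE; apply: subset_leq_card; apply/subsetP => F.
  rewrite !inE => /andP [mF vF]; apply: maxset_restr mF => //.
  apply/subsetP => y yF; rewrite !inE andbT; apply/eqP => E.
  by rewrite -E yF in vF.
have h2 : #|M2| <= phi e (~: cnbh e v).
  rewrite -(@card_in_imset _ _ (fun F => F :\ v)); last first.
    move=> F1 F2; rewrite !inE => /andP [_ /andP [v1 _]] /andP [_ /andP [v2 _]] E.
    by rewrite -(setD1K v1) -(setD1K v2) E.
  rewrite phiE; apply: subset_leq_card; apply/subsetP => G /imsetP [F].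
  rewrite !inE => /andP [mF /andP [vF /eqP Fv]] ->.
  exact: L2.
have h3 u : u \in nbh e v -> #|M3 u| <= phi e (~: (cnbh e v :|: cnbh e u)).
  rewrite in_nbh => vu.
  rewrite -(@card_in_imset _ _ (fun F => F :\ u :\ v)); last first.
    move=> F1 F2; rewrite !inE => /andP [_ /andP [v1 u1]] /andP [_ /andP [v2 u2]] E.
    have uv : v != u by apply/eqP => E'; rewrite E' e_irr in vu.
    rewrite -(setD1K u1) -(setD1K u2) -(setD1K (_ : v \in F1 :\ u)) ?inE ?uv //.
    by rewrite -(setD1K (_ : v \in F2 :\ u)) ?inE ?uv // E.
  rewrite phiE; apply: subset_leq_card; apply/subsetP => G /imsetP [F].
  rewrite !inE => /andP [mF /andP [vF uF]] ->.
  exact: L3.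
have h3s : #|\bigcup_(u in nbh e v) M3 u| <=
    \sum_(u in nbh e v) phi e (~: (cnbh e v :|: cnbh e u)).
  apply: leq_trans (card_bigcup_le _ _) _; apply: leq_sum => u; exact: h3.
have cover F : F \in M -> [\/ F \in M1, F \in M2 | F \in \bigcup_(u in nbh e v) M3 u].
  move=> mF; case vF: (v \in F); last by constructor 1; rewrite in_set mF vF.
  case F0: (F :&: nbh e v == set0); first by constructor 2; rewrite in_set mF vF F0.
  constructor 3; case/set0Pn: (negbT F0) => u; rewrite inE => /andP [uF uv].
  by apply/bigcupP; exists u => //; rewrite in_set mF vF uF.
split.
  rewrite phiE -/M; apply: leq_trans (_ : #|M1 :|: M2 :|: \bigcup_(u in nbh e v) M3 u| <= _).
    apply: subset_leq_card; apply/subsetP => F /cover [] H; by rewrite !in_setU H ?orbT.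
  apply: leq_trans (leq_card_setU _ _) _; apply: leq_add => //.
  apply: leq_trans (leq_card_setU _ _) _; exact: leq_add.
case=> w wv sw.
rewrite phiE -/M; apply: leq_trans (_ : #|M1 :|: \bigcup_(u in nbh e v) M3 u| <= _).
  apply: subset_leq_card; apply/subsetP => F mF; case: (cover F mF) => H.
  - by rewrite in_setU H.
  - move: H; rewrite !inE => /andP [mF' /andP [vF /eqP F0]].
    by case: (L4 e_sym e_irr mF' vF F0 wv sw).
  - by rewrite in_setU H orbT.
apply: leq_trans (leq_card_setU _ _) _; exact: leq_add.
Qed.
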